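(* Let $A_1\in N_p$ and $A_2\in N_q$ be Belitskii canonical forms (under $B_p$- and $B_q$-similarity respectively), with $A_1\in Q_1U_p$ and $A_2\in Q_2U_q$ for subpermutations $Q_1\in N_p$ and $Q_2\in N_q$. If $Q_{12}\in M_{p,q}(\mathbb F)$ is such that $\begin{pmatrix}Q_1&Q_{12}\\0&Q_2\end{pmatrix}$ is a subpermutation, then $\begin{pmatrix}A_1&Q_{12}\\0&A_2\end{pmatrix}$ is a Belitskii canonical form in $N_{p+q}$ (under $B_{p+q}$-similarity).
   Context: $\mathbb F$ is a field. For each $m$, $B_m$ (resp. $U_m$, $N_m$) denotes the set of $m\times m$ invertible upper triangular (resp. upper triangular with all diagonal entries $1$, strictly upper triangular) matrices over $\mathbb F$; $M_{p,q}(\mathbb F)$ is the set of $p\times q$ matrices; $QU_m=\{QU:U\in U_m\}$. A subpermutation is a matrix each of whose rows and columns has at most one nonzero entry, and that entry equals $1$. Matrices $A,C$ are $G$-similar if $C=BAB^{-1}$ for some $B\in G$. Belitskii order on positions $\{(i,j):1\le i<j\le m\}$: $(i,j)\prec(i',j')$ iff $i>i'$, or $i=i'$ and $j<j'$ (so $(m-1,m)\prec(m-2,m-1)\prec(m-2,m)\prec\cdots\prec(1,m)$). Belitskii's algorithm for $B_m$-similarity on $N_m$: given $A\in N_m$ put $A^{(0)}=A$, $G^{(0)}=B_m$. For $k=0,1,\dots$, let $(p',q')$ be the $(k+1)$th position in Belitskii order and look at the $(p',q')$ entries of all matrices $G^{(k)}$-similar to $A^{(k)}$: (a) if this entry is always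 $0$ or can take every value of $\mathbb F$, choose $A^{(k+1)}$ $G^{(k)}$-similar to $A^{(k)}$ with that entry $0$; (b) if it takes exactly the values of $\mathbb F\setminus\{0\}$, choose $A^{(k+1)}$ with that entry $1$; (c) otherwise it is a constant $\lambda\neq 0$ and $A^{(k+1)}=A^{(k)}$. $G^{(k+1)}$ is the subgroup of $g\in G^{(k)}$ such that $gA^{(k+1)}g^{-1}$ agrees with $A^{(k+1)}$ in the first $k+1$ positions. The final matrix is the Belitskii canonical form of $A$; a matrix is a Belitskii canonical form if it is the Belitskii canonical form of some matrix. *)

(* Defs.v *)
From HB Require Import structures.
From mathcomp Require Import all_boot all_order all_algebra.
Set Implicit Arguments. Unset Strict Implicit. Unset Printing Implicit Defensive.
Import GRing.Theory.
Local Open Scope ring_scope.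

Section Belitskii.
Variable F : fieldType.

Definition strict_upper m (A : 'M[F]_m) : Prop :=
  forall i j : 'I_m, (j <= i)%N -> A i j = 0.

Definition inv_upper m (A : 'M[F]_m) : Prop :=
  A \in unitmx /\ forall i j : 'I_m, (j < i)%N -> A i j = 0.

Definition unipotent_upper m (A : 'M[F]_m) : Prop :=
  (forall i j : 'I_m, (j < i)%N -> A i j = 0) /\ (forall i : 'I_m, A i i = 1).

Definition subperm_mx m n (A : 'M[F]_(m, n)) : Prop :=
  (forall i j, A i j = 0 \/ A i j = 1) /\
  (forall i j j', A i j != 0 -> A i j' != 0 -> j = j') /\
  (forall i i' j, A i j != 0 -> A i' j != 0 -> i = i').

(* positions (i,j), i<j, in Belitskii order: i decreasing, then j increasing *)
Definition bel_positions m : seq ('I_m * 'I_m) :=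
  [seq (i, j) | i : 'I_m <- rev (enum 'I_m), j : 'I_m <- [seq j : 'I_m <- enum 'I_m | (i < j)%N]].

Definition conjmx m (g A : 'M[F]_m) : 'M[F]_m := g *m A *m invmx g.

Definition agree_first m (k : nat) (B A : 'M[F]_m) : Prop :=
  forall ij, ij \in take k (bel_positions m) -> B ij.1 ij.2 = A ij.1 ij.2.

Definition bel_group m (Aseq : nat -> 'M[F]_m) (k : nat) (g : 'M[F]_m) : Prop :=
  inv_upper g /\
  forall l, (l < k)%N -> agree_first l.+1 (conjmx g (Aseq l.+1)) (Aseq l.+1).

Definition bel_values m (Aseq : nat -> 'M[F]_m) (k : nat) (ij : 'I_m * 'I_m)
  (x : F) : Prop :=
  exists2 g, bel_group Aseq k g & (conjmx g (Aseq k)) ij.1 ij.2 = x.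

Definition bel_step m (Aseq : nat -> 'M[F]_m) (k : nat) (ij : 'I_m * 'I_m) : Prop :=
  let S := bel_values Aseq k ij in
  let caseA := (forall x, S x -> x = 0) \/ (forall x, S x) in
  let caseB := forall x, S x <-> x != 0 in
  (caseA -> exists2 g, bel_group Aseq k g &
              Aseq k.+1 = conjmx g (Aseq k) /\ (Aseq k.+1) ij.1 ij.2 = 0) /\
  (~ caseA -> caseB -> exists2 g, bel_group Aseq k g &
              Aseq k.+1 = conjmx g (Aseq k) /\ (Aseq k.+1) ij.1 ij.2 = 1) /\
  (~ caseA -> ~ caseB -> Aseq k.+1 = Aseq k).

(* A is a Belitskii canonical form: the final matrix of some run of the
   algorithm (with any admissible choices) started at some A0 in N_m *)
Definition belitskii_canonical m (A : 'M[F]_m) : Prop :=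
  exists Aseq : nat -> 'M[F]_m,
    [/\ strict_upper (Aseq 0%N),
        (forall k ij, onth (bel_positions m) k = Some ij -> bel_step Aseq k ij)
      & Aseq (size (bel_positions m)) = A].

End Belitskii.

(* Main.v *)
Require Import Defs.
From HB Require Import structures.
From mathcomp Require Import all_boot all_order all_algebra.
From mathcomp Require Import zify.
From Stdlib Require Import Classical.
Require Import Defs.
Set Implicit Arguments. Unset Strict Implicit. Unset Printing Implicit Defensive.
Import GRing.Theory.
Local Open Scope ring_scope.

Definition belt m (x y : 'I_m * 'I_m) : bool :=
  (y.1 < x.1)%N || (((x.1 : nat) == y.1) && (x.2 < y.2)%N).

Lemma belt_irr m (x : 'I_m * 'I_m) : ~~ belt x x.
Proof. rewrite /belt; apply/negP => /orP [] /=; lia. Qed.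

Lemma belt_asym m (x y : 'I_m * 'I_m) : belt x y -> ~~ belt y x.
Proof. rewrite /belt => /orP [] H; apply/negP => /orP []; lia. Qed.

Lemma mem_bel m (x : 'I_m * 'I_m) : (x \in bel_positions m) = (x.1 < x.2)%N.
Proof.
apply/allpairsPdep/idP.
  by case=> [i [j [_ hj ->]]]; rewrite mem_filter in hj; case/andP: hj.
move=> h; exists x.1, x.2; split; rewrite ?mem_rev ?mem_enum ?mem_filter ?h ?mem_enum //.
  by rewrite -enumT mem_enum.
by case: x {h}.
Qed.

Lemma pairwise_enum_ord m : pairwise (fun a b : 'I_m => (a < b)%N) (enum 'I_m).
Proof.
have -> : (fun a b : 'I_m => (a < b)%N) = relpre val ltn by [].
by rewrite -pairwise_map val_enum_ord -sorted_pairwise ?iota_ltn_sorted //; exact: ltn_trans.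
Qed.

Lemma pairwise_bel_gen m (r : seq 'I_m) :
  pairwise (fun a b : 'I_m => (b < a)%N) r ->
  pairwise (@belt m) [seq (i, j) | i : 'I_m <- r, j <- [seq j : 'I_m <- enum 'I_m | (i < j)%N]].
Proof.
elim: r => [|a r IH] // H; case/andP: (H) => ha hr.
rewrite allpairs_cons pairwise_cat IH // andbT; apply/andP; split.
  apply/allrelP => x y /mapP [j _ ->] /allpairsPdep [i [j' [hi _ ->]]].
  by rewrite /belt /= (allP ha i hi).
rewrite pairwise_map; apply: pairwise_filter.
apply: sub_pairwise (pairwise_enum_ord m) => x y /= h.
by rewrite /belt /= eqxx h orbT.
Qed.

Lemma pairwise_bel m : pairwise (@belt m) (bel_positions m).
Proof.
apply: pairwise_bel_gen.
have -> : (fun a b : 'I_m => (b < a)%N) = relpre val (fun a b => b < a)%N by [].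
rewrite -pairwise_map map_rev val_enum_ord -sorted_pairwise.
  by rewrite rev_sorted iota_ltn_sorted.
by move=> a b c /= h1 h2; exact: ltn_trans h2 h1.
Qed.

Lemma take_bel m k (ij x : 'I_m * 'I_m) : onth (bel_positions m) k = Some ij ->
  (x \in take k (bel_positions m)) = (x \in bel_positions m) && belt x ij.
Proof.
move=> hk; set s := bel_positions m.
have ks : (k < size s)%N by rewrite -onthTE hk.
have nk : nth ij s k = ij by apply: onth_nth.
case xs: (x \in s); last by apply/negbTE/negP => /mem_take; rewrite xs.
rewrite /= in_take //.
have ix : (index x s < size s)%N by rewrite index_mem.
have nx : nth ij s (index x s) = x by rewrite nth_index.
have pw := pairwiseP ij (pairwise_bel m).
case: (ltngtP (index x s) k) => h.
- by rewrite -nx -{2}nk; symmetry; apply: pw.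
- have := pw _ _ ks ix h; rewrite nk nx => /belt_asym /negbTE ->; done.
- by rewrite -nx h nk (negbTE (belt_irr _)).
Qed.

Lemma onth_mem (T : eqType) (s : seq T) k x : onth s k = Some x -> x \in s.
Proof. by move=> h; apply/onthP; exists k. Qed.

Lemma onth_index (T : eqType) (s : seq T) x : x \in s -> onth s (index x s) = Some x.
Proof. by move=> h; rewrite onthE (nth_map x) ?index_mem // nth_index. Qed.

Section Mx.
Variable F : fieldType.

Definition upper m (g : 'M[F]_m) := forall i j : 'I_m, (j < i)%N -> g i j = 0.

Lemma upper_diag_neq0 m (g : 'M[F]_m) : upper g ->
  (g \in unitmx) = [forall i, g i i != 0].
Proof.
move=> ug; rewrite unitmxE unitfE -det_tr det_trig.
  apply/prodf_neq0/forallP => [h i | h i _]; first by have := h i isT; rewrite mxE.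
  by rewrite mxE.
by apply/is_trig_mxP => i j h; rewrite mxE ug.
Qed.

Lemma inv_upper_diag m (g : 'M[F]_m) : inv_upper g -> forall i, g i i != 0.
Proof.
case=> u ug i; have : [forall i, g i i != 0] by rewrite -upper_diag_neq0.
by move/forallP.
Qed.

Lemma mulmx_entry m (a b : 'M[F]_m) i j : (a *m b) i j = \sum_k a i k * b k j.
Proof. by rewrite mxE. Qed.

Lemma invmx_upper m (g : 'M[F]_m) : inv_upper g ->
  upper (invmx g) /\ forall i, invmx g i i * g i i = 1.
Proof.
move=> hg; have [u ug] := hg; have dz := inv_upper_diag hg.
have hg1 : invmx g *m g = 1%:M by rewrite mulVmx.
have up : upper (invmx g).
  move=> i j; move: {2}(j : nat) (erefl (j : nat)) => n; elim/ltn_ind: n j => n IH j jn ji.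
  have := congr1 (fun M : 'M[F]_m => M i j) hg1; rewrite mulmx_entry mxE.
  have -> : (i == j) = false by apply/negbTE; apply/eqP => e; rewrite e ltnn in ji.
  rewrite (bigD1 j) //= big1 ?addr0.
    by move/eqP; rewrite mulf_eq0 (negbTE (dz j)) orbF => /eqP.
  move=> k kj; case: (ltngtP k j) => h.
  - by rewrite (IH k) ?mul0r //; [rewrite -jn | apply: ltn_trans ji].
  - by rewrite ug ?mulr0.
  - by move: kj; rewrite (val_inj h) eqxx.
split=> // i.
have := congr1 (fun M : 'M[F]_m => M i i) hg1; rewrite mulmx_entry mxE eqxx /=.
rewrite (bigD1 i) //= big1 ?addr0 // => k ki; case: (ltngtP k i) => h.
- by rewrite up ?mul0r.
- by rewrite ug ?mulr0.
- by move: ki; rewrite (val_inj h) eqxx.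
Qed.

Lemma upper_mul m (a b : 'M[F]_m) : upper a -> upper b -> upper (a *m b).
Proof.
move=> ua ub i j ji; rewrite mulmx_entry big1 // => k _.
case: (ltnP k i) => h; first by rewrite ua ?mul0r.
by rewrite ub ?mulr0 //; apply: leq_trans ji h.
Qed.

Lemma inv_upper_mul m (a b : 'M[F]_m) : inv_upper a -> inv_upper b -> inv_upper (a *m b).
Proof.
case=> ua ha [ub hb]; split; first by rewrite unitmx_mul ua ub.
exact: upper_mul.
Qed.

Lemma inv_upper_inv m (a : 'M[F]_m) : inv_upper a -> inv_upper (invmx a).
Proof. move=> ha; split; first by rewrite unitmx_inv; case: ha. by case: (invmx_upper ha). Qed.

Lemma inv_upper1 m : inv_upper (1%:M : 'M[F]_m).
Proof. by split; [exact: unitmx1 | move=> i j ji; rewrite mxE; case: eqP => // e; rewrite e ltnn in ji]. Qed.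

Lemma invmx_mul m (a b : 'M[F]_m) : a \in unitmx -> b \in unitmx ->
  invmx (a *m b) = invmx b *m invmx a.
Proof.
move=> ua ub; have uab : a *m b \in unitmx by rewrite unitmx_mul ua ub.
have e : (a *m b) *m (invmx b *m invmx a) = 1%:M.
  by rewrite -mulmxA (mulmxA b) mulmxV // mul1mx mulmxV.
by rewrite -[RHS]mul1mx -(mulVmx uab) -mulmxA e mulmx1.
Qed.

Lemma bconj_mul m (g h X : 'M[F]_m) : g \in unitmx -> h \in unitmx ->
  conjmx (g *m h) X = conjmx g (conjmx h X).
Proof. by move=> ug uh; rewrite /conjmx invmx_mul // !mulmxA. Qed.

Lemma bconjK m (g X : 'M[F]_m) : g \in unitmx -> conjmx (invmx g) (conjmx g X) = X.
Proof.
by move=> ug; rewrite /conjmx invmxK !mulmxA mulVmx // mul1mx -mulmxA mulVmx // mulmx1.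
Qed.

Lemma bconj1 m (X : 'M[F]_m) : conjmx 1%:M X = X.
Proof. by rewrite /conjmx invmx1 mul1mx mulmx1. Qed.

Lemma conj_entry m (g X : 'M[F]_m) i j :
  conjmx g X i j = \sum_b \sum_a g i a * X a b * invmx g b j.
Proof.
rewrite /conjmx mulmx_entry; apply: eq_bigr => b _; rewrite mulmx_entry mulr_suml.
by apply: eq_bigr => a _. Qed.

Lemma conj_strict m (g X : 'M[F]_m) : inv_upper g -> strict_upper X ->
  strict_upper (conjmx g X).
Proof.
move=> hg sX i j ji; have [ui _] := invmx_upper hg; have [_ ug] := hg.
rewrite conj_entry big1 // => b _; rewrite big1 // => a _.
case: (ltnP a i) => h1; first by rewrite ug ?mul0r.
case: (ltnP j b) => h2; first by rewrite ui ?mulr0.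
by rewrite sX ?mulr0 ?mul0r //; lia.
Qed.

End Mx.

Lemma take_mono (T : eqType) (s : seq T) r r' x : (r <= r')%N -> x \in take r s -> x \in take r' s.
Proof.
move=> rr xt; have xs := mem_take xt; rewrite in_take //.
by apply: leq_trans rr; rewrite -(in_take _ xs).
Qed.

Lemma take_down m r (x y : 'I_m * 'I_m) : x \in take r (bel_positions m) ->
  y \in bel_positions m -> belt y x -> y \in take r (bel_positions m).
Proof.
move=> xt ys yx; have xs := mem_take xt.
have hk := onth_index xs.
have : y \in take (index x (bel_positions m)) (bel_positions m) by rewrite (take_bel _ hk) ys.
by apply: take_mono; apply: ltnW; rewrite -(in_take _ xs).
Qed.

Lemma onth_take m k (ij : 'I_m * 'I_m) : onth (bel_positions m) k = Some ij ->
  ij \in take k.+1 (bel_positions m).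
Proof.
move=> hk; have ks : (k < size (bel_positions m))%N by rewrite -onthTE hk.
by rewrite (take_nth ij ks) (onth_nth ij ij _ _ hk) mem_rcons mem_head.
Qed.

Section Agree.
Variable F : fieldType.

Definition Stab m r (X g : 'M[F]_m) := inv_upper g /\ agree_first r (conjmx g X) X.

Lemma agree_mono m r r' (X Y : 'M[F]_m) : (r <= r')%N -> agree_first r' X Y -> agree_first r X Y.
Proof. by move=> rr h ij hij; apply: h; apply: take_mono hij. Qed.

Lemma agree_sym m r (X Y : 'M[F]_m) : agree_first r X Y -> agree_first r Y X.
Proof. by move=> h ij hij; rewrite h. Qed.

Lemma agree_trans m r (X Y Z : 'M[F]_m) : agree_first r X Y -> agree_first r Y Z -> agree_first r X Z.
Proof. by move=> h1 h2 ij hij; rewrite h1 // h2. Qed.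

Lemma agree_refl m r (X : 'M[F]_m) : agree_first r X X.
Proof. by []. Qed.

Lemma agree0 m (X Y : 'M[F]_m) : agree_first 0 X Y.
Proof. by move=> ij; rewrite take0. Qed.

Lemma agree_conj m r (g X Y : 'M[F]_m) : inv_upper g -> strict_upper X -> strict_upper Y ->
  agree_first r X Y -> agree_first r (conjmx g X) (conjmx g Y).
Proof.
move=> hg sX sY h [i j] hij /=.
have [ui _] := invmx_upper hg; have [_ ug] := hg.
rewrite !conj_entry; apply: eq_bigr => b _; apply: eq_bigr => a _.
case: (ltnP a i) => h1; first by rewrite ug ?mul0r.
case: (ltnP j b) => h2; first by rewrite ui ?mulr0.
case: (ltnP a b) => h3; last by rewrite sX ?sY.
have abs : (a, b) \in bel_positions m by rewrite mem_bel.
have ijs : (i, j) \in bel_positions m := mem_take hij.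
rewrite (h (a, b)) //.
case: (boolP ((a, b) == (i, j))) => [/eqP -> // | ne].
apply: take_down hij abs _.
move: ne; rewrite xpair_eqE /belt /=.
have -> : (a == i) = ((a : nat) == i) by [].
have -> : (b == j) = ((b : nat) == j) by [].
lia.
Qed.

Lemma agree_transfer m r (g X Y : 'M[F]_m) : inv_upper g -> strict_upper X -> strict_upper Y ->
  agree_first r X Y -> agree_first r (conjmx g X) X -> agree_first r (conjmx g Y) Y.
Proof.
move=> hg sX sY hXY hX.
apply: agree_trans (agree_conj hg sY sX (agree_sym hXY)) _.
exact: agree_trans hX hXY.
Qed.

Lemma Stab_mul m r (X g h : 'M[F]_m) : strict_upper X -> Stab r X g -> Stab r X h ->
  Stab r X (g *m h).
Proof.
move=> sX [hg ag] [hh ah]; split; first exact: inv_upper_mul.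
rewrite bconj_mul; [|by case: hg|by case: hh].
apply: agree_trans ag.
by apply: agree_conj => //; apply: conj_strict.
Qed.

Lemma Stab_inv m r (X g : 'M[F]_m) : strict_upper X -> Stab r X g -> Stab r X (invmx g).
Proof.
move=> sX [hg ag]; split; first exact: inv_upper_inv.
have := agree_conj (inv_upper_inv hg) (conj_strict hg sX) sX ag.
rewrite bconjK; last by case: hg.
by move/agree_sym.
Qed.

End Agree.

Section FPsec.
Variable F : fieldType.

Definition FP m (A : 'M[F]_m) : Prop := forall k ij,
  onth (bel_positions m) k = Some ij -> A ij.1 ij.2 != 0 ->
  ~ (forall x, exists2 g, Stab k A g & conjmx g A ij.1 ij.2 = x) /\
  ((forall x, (exists2 g, Stab k A g & conjmx g A ij.1 ij.2 = x) <-> x != 0) ->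
     A ij.1 ij.2 = 1).

Lemma canon_FP m (A : 'M[F]_m) : belitskii_canonical A -> strict_upper A /\ FP A.
Proof.
case=> Aseq [s0 hstep hA]; set n := size (bel_positions m) in hA.
have step : forall k, (k < n)%N ->
    exists2 g, bel_group Aseq k g & Aseq k.+1 = conjmx g (Aseq k).
  move=> k kn; have [ij hk] : exists ij, onth (bel_positions m) k = Some ij.
    by move: kn; rewrite /n -onthTE; case: onth => // ij _; exists ij.
  have [hA' [hB hC]] := hstep k ij hk.
  pose S := bel_values Aseq k ij.
  case: (classic ((forall x, S x -> x = 0) \/ (forall x, S x))) => [cA | ncA].
    by have [g hg [e _]] := hA' cA; exists g.
  case: (classic (forall x, S x <-> x != 0)) => [cB | ncB].
    by have [g hg [e _]] := hB ncA cB; exists g.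
  exists 1%:M; last by rewrite bconj1 hC.
  split; first exact: inv_upper1.
  by move=> l _; rewrite bconj1.
have strict : forall k, (k <= n)%N -> strict_upper (Aseq k).
  elim=> [|k IH] kn //; have [g [hg _] ->] := step k kn.
  by apply: conj_strict => //; apply: IH; apply: ltnW.
have pre : forall k, (k < n)%N -> agree_first k (Aseq k.+1) (Aseq k).
  move=> k kn; have [g [_ hl] ->] := step k kn.
  by case: k {kn} hl => [|l] hl; [exact: agree0 | exact: hl l (ltnSn l)].
have preA : forall l k, (l <= k)%N -> (k <= n)%N -> agree_first l (Aseq k) (Aseq l).
  move=> l; elim=> [|k IH] lk kn.
    by move: lk; rewrite leqn0 => /eqP ->.
  move: lk; rewrite leq_eqVlt ltnS => /orP [/eqP -> //| lk].
  exact: agree_trans (agree_mono lk (pre k kn)) (IH lk (ltnW kn)).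
have SA : strict_upper A by rewrite -hA; apply: strict.
have grp : forall k g, (k < n)%N -> bel_group Aseq k g <-> Stab k A g.
  move=> k g kn; split.
    case=> hg hl; split => //; case: k kn hl => [|l] kn hl; first exact: agree0.
    have hl' := hl l (ltnSn l).
    apply: agree_transfer hg (strict _ (ltnW kn)) SA _ hl'.
    by rewrite -hA; apply: agree_sym; apply: preA => //; apply: ltnW.
  case=> hg ag; split => // l lk.
  apply: agree_transfer hg SA (strict _ (leq_trans lk (ltnW kn))) _ (agree_mono lk ag).
  by rewrite -hA; apply: preA => //; apply: leq_trans lk (ltnW kn).
split => // k ij hk nz.
have kn : (k < n)%N by rewrite /n -onthTE hk.
have [hA' [hB hC]] := hstep k ij hk.
have [h hh eh] := step k kn.
have Sh : Stab k A h by apply/grp.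
have agk1 : agree_first k.+1 A (Aseq k.+1) by rewrite -hA; apply: preA.
have ijt := onth_take hk.
have key : forall g, inv_upper g ->
    conjmx g A ij.1 ij.2 = conjmx g (Aseq k.+1) ij.1 ij.2.
  move=> g hg; apply: (agree_conj hg SA (strict _ kn) agk1); exact: ijt.
have hS : forall x, bel_values Aseq k ij x <->
    exists2 g, Stab k A g & conjmx g A ij.1 ij.2 = x.
  move=> x; split.
    case=> g hg <-; have Sg : Stab k A g by apply/grp.
    have Sg' := Stab_mul SA Sg (Stab_inv SA Sh).
    exists (g *m invmx h) => //; rewrite key; last by case: Sg'.
    have uh : h \in unitmx by case: Sh => [[]].
    have ug : g \in unitmx by case: Sg => [[]].
    rewrite eh bconj_mul ?unitmx_inv //.
    by rewrite (@bconjK F m h (Aseq k)).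
  case=> g Sg <-; have Sg' := Stab_mul SA Sg Sh.
  exists (g *m h); first by apply/grp.
  have [[ug _] _] := Sg; have [[uh _] _] := Sh.
  by rewrite key; [rewrite eh bconj_mul | case: Sg].
have Aij : A ij.1 ij.2 = Aseq k.+1 ij.1 ij.2 by rewrite (agk1 ij).
split.
  move=> hall.
  have [g _ [_ e0]] := hA' (or_intror (fun x => (hS x).2 (hall x))).
  by move: nz; rewrite Aij e0 eqxx.
move=> hnz.
have ncA : ~ ((forall x, bel_values Aseq k ij x -> x = 0) \/ (forall x, bel_values Aseq k ij x)).
  case=> [h0 | hall].
    by have := h0 1 ((hS 1).2 ((hnz 1).2 (oner_neq0 _))); apply/eqP; exact: oner_neq0.
  by have := (hnz 0).1 ((hS 0).1 (hall 0)); rewrite eqxx.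
have cB : forall x, bel_values Aseq k ij x <-> x != 0.
  by move=> x; split => [/(hS x).1 /(hnz x).1 | /(hnz x).2 /(hS x).2].
by have [g _ [_ e1]] := hB ncA cB; rewrite Aij.
Qed.

Lemma FP_canon m (M : 'M[F]_m) : strict_upper M -> FP M -> belitskii_canonical M.
Proof.
move=> sM hM; exists (fun _ => M); split => // k ij hk.
have grp : forall g, bel_group (fun _ => M) k g <-> Stab k M g.
  move=> g; split.
    case=> hg hl; split => //.
    by case: k {hk} hl => [|l] hl; [exact: agree0 | exact: hl l (ltnSn l)].
  by case=> hg ag; split => // l lk; exact: agree_mono lk ag.
have hS : forall x, bel_values (fun _ => M) k ij x <->
    exists2 g, Stab k M g & conjmx g M ij.1 ij.2 = x.
  by move=> x; split; case=> g hg e; exists g => //; apply/grp.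
have S1 : Stab k M 1%:M by split; [exact: inv_upper1 | rewrite bconj1].
have v1 : bel_values (fun _ => M) k ij (M ij.1 ij.2).
  by apply/hS; exists 1%:M => //; rewrite bconj1.
split; [|split] => //=.
  move=> cA; exists 1%:M; first by apply/grp.
  split; first by rewrite bconj1.
  case: (eqVneq (M ij.1 ij.2) 0) => // nz; have [nall _] := hM k ij hk nz.
  case: cA => [h0 | hall]; first by move: nz; rewrite (h0 _ v1) eqxx.
  by case: nall => x; apply/hS.
move=> ncA cB; exists 1%:M; first by apply/grp.
split; first by rewrite bconj1.
case: (eqVneq (M ij.1 ij.2) 0) => [z | nz].
  by have := (cB _).1 v1; rewrite z eqxx.
have [_ h1] := hM k ij hk nz; apply: h1 => x.
by split => [/hS/cB | /cB/hS].
Qed.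

End FPsec.

Lemma ord_split_ind p q (P : 'I_(p + q) -> Prop) :
  (forall i, P (lshift q i)) -> (forall i, P (rshift p i)) -> forall i, P i.
Proof. by move=> hl hr i; rewrite -(splitK i); case: split => i' /=. Qed.

Section Block.
Variable F : fieldType.

Lemma fp_sub (S T : F -> Prop) (v : F) : (forall x, S x -> T x) -> v != 0 ->
  (~ (forall x, T x) /\ ((forall x, T x <-> x != 0) -> v = 1)) ->
  (~ (forall x, S x) /\ ((forall x, S x <-> x != 0) -> v = 1)).
Proof.
move=> ST nz [nT hT]; split; first by move=> hS; apply: nT => x; apply: ST.
move=> hS; apply: hT => x; split; last by move=> /hS /ST.
move=> Tx; apply/negP => /eqP x0; apply: nT => y.
case: (eqVneq y 0) => [-> | ny]; first by rewrite -x0.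
by apply: ST; apply/hS.
Qed.

Lemma upper_dl p q (g : 'M[F]_(p + q)) : (forall i j : 'I_(p + q), (j < i)%N -> g i j = 0) ->
  dlsubmx g = 0.
Proof. by move=> ug; apply/matrixP => i j; rewrite !mxE ug //= ltn_addr. Qed.

Lemma inv_upper_ul p q (g : 'M[F]_(p + q)) : inv_upper g -> inv_upper (ulsubmx g).
Proof.
move=> hg; have dz := inv_upper_diag hg; have [_ ug] := hg.
have up : upper (ulsubmx g) by move=> i j ji; rewrite !mxE ug.
split => //; rewrite upper_diag_neq0 //; apply/forallP => i; rewrite !mxE; exact: dz.
Qed.

Lemma inv_upper_dr p q (g : 'M[F]_(p + q)) : inv_upper g -> inv_upper (drsubmx g).
Proof.
move=> hg; have dz := inv_upper_diag hg; have [_ ug] := hg.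
have up : upper (drsubmx g) by move=> i j ji; rewrite !mxE ug //= ltn_add2l.
split => //; rewrite upper_diag_neq0 //; apply/forallP => i; rewrite !mxE; exact: dz.
Qed.

Lemma conj_block p q (g X : 'M[F]_(p + q)) : inv_upper g -> dlsubmx X = 0 ->
  dlsubmx (conjmx g X) = 0 ->
  ulsubmx (conjmx g X) = conjmx (ulsubmx g) (ulsubmx X) /\
  drsubmx (conjmx g X) = conjmx (drsubmx g) (drsubmx X).
Proof.
move=> hg dX dN; set N := conjmx g X.
have ug : g \in unitmx by case: hg.
have e : N *m g = g *m X by rewrite /N /conjmx -mulmxA mulVmx // mulmx1.
have dg : dlsubmx g = 0 by apply: upper_dl; case: hg.
rewrite -[N](submxK N) -[g in LHS](submxK g) -[g in RHS](submxK g) -(submxK X) dN dg dX !mulmx_block in e.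
move: e; rewrite !mul0mx !mulmx0 !addr0 !add0r => /eq_block_mx [e1 _ _ e4].
have [u1 _] := inv_upper_ul hg; have [u2 _] := inv_upper_dr hg.
split; rewrite /conjmx.
  by rewrite -e1 -mulmxA mulmxV // mulmx1.
by rewrite -e4 -mulmxA mulmxV // mulmx1.
Qed.

Lemma pivot m (Q U g : 'M[F]_m) (i j : 'I_m) : unipotent_upper U -> inv_upper g ->
  (forall a, Q a j = (a == i)%:R) ->
  (forall b : 'I_m, (b < j)%N -> conjmx g (Q *m U) i b = 0) ->
  conjmx g (Q *m U) i j != 0.
Proof.
move=> [uU dU] hg hQ hN.
have iU : inv_upper U.
  by split => //; rewrite upper_diag_neq0 //; apply/forallP => a; rewrite dU oner_neq0.
have [uiU _] := invmx_upper iU.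
have ug : g \in unitmx by case: hg.
have uUm : U \in unitmx by case: iU.
set N := conjmx g (Q *m U).
have e : N *m (g *m invmx U) = g *m Q.
  by rewrite /N /conjmx !mulmxA mulmxKV // mulmxK.
have uW : upper (g *m invmx U) by apply: upper_mul => //; case: hg.
have := congr1 (fun M : 'M[F]_m => M i j) e; rewrite /= [in LHS]mulmx_entry [in RHS]mulmx_entry.
rewrite (bigD1 j) //= big1; last first.
  move=> b bj; case: (ltngtP b j) => h.
  - by rewrite hN ?mul0r.
  - by rewrite uW ?mulr0.
  - by move: bj; rewrite (val_inj h) eqxx.
rewrite (bigD1 i) //= big1; last by move=> a ai; rewrite hQ (negbTE ai) mulr0.
rewrite hQ eqxx !addr0 mulr1 => h; apply/negP => /eqP h0.
by move: (inv_upper_diag hg i); rewrite -h h0 mul0r eqxx.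
Qed.

End Block.

Section Main.
Variable F : fieldType.

Lemma ul_entry p q (X : 'M[F]_(p + q)) a b : ulsubmx X a b = X (lshift q a) (lshift q b).
Proof. by rewrite !mxE. Qed.

Lemma mulmx_entryR m n r (X : 'M[F]_(m, n)) (Y : 'M[F]_(n, r)) a b :
  (X *m Y) a b = \sum_k X a k * Y k b.
Proof. by rewrite mxE. Qed.

Lemma dr_entry p q (X : 'M[F]_(p + q)) a b : drsubmx X a b = X (rshift p a) (rshift p b).
Proof. by rewrite !mxE. Qed.

Lemma block_FP p q (A1 Q1 U1 : 'M[F]_p) (A2 Q2 U2 : 'M[F]_q) (Q12 : 'M[F]_(p, q)) :
  strict_upper A1 -> FP A1 -> strict_upper A2 -> FP A2 ->
  unipotent_upper U1 -> A1 = Q1 *m U1 -> unipotent_upper U2 -> A2 = Q2 *m U2 ->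
  subperm_mx (block_mx Q1 Q12 0 Q2) ->
  strict_upper (block_mx A1 Q12 0 A2) /\ FP (block_mx A1 Q12 0 A2).
Proof.
move=> sA1 f1 sA2 f2 hU1 eA1 hU2 eA2 hQ.
have sM : strict_upper (block_mx A1 Q12 0 A2).
  move=> i j; elim/ord_split_ind: i => i; elim/ord_split_ind: j => j /= ji.
  - by rewrite block_mxEul sA1.
  - have := ltn_ord i; lia.
  - by rewrite block_mxEdl mxE.
  - by rewrite block_mxEdr sA2 // -(leq_add2l p).
have dM : dlsubmx (block_mx A1 Q12 0 A2) = 0 by rewrite block_mxKdl.
split => // k [i j] hk.
have ijs := onth_mem hk; rewrite mem_bel /= in ijs.
have common : forall g, Stab k (block_mx A1 Q12 0 A2) g ->
   [/\ inv_upper g, strict_upper (conjmx g (block_mx A1 Q12 0 A2)),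
       agree_first k (conjmx g (block_mx A1 Q12 0 A2)) (block_mx A1 Q12 0 A2),
       ulsubmx (conjmx g (block_mx A1 Q12 0 A2)) = conjmx (ulsubmx g) A1 &
       drsubmx (conjmx g (block_mx A1 Q12 0 A2)) = conjmx (drsubmx g) A2].
  move=> g [hg ag]; have sN := conj_strict hg sM.
  have dN : dlsubmx (conjmx g (block_mx A1 Q12 0 A2)) = 0.
    by apply: upper_dl => a b ba; apply: sN; apply: ltnW.
  have [e1 e2] := conj_block hg dM dN.
  by split => //; [rewrite e1 block_mxKul | rewrite e2 block_mxKdr].
move: i j hk ijs; elim/ord_split_ind => i; elim/ord_split_ind => j hk /= ijs nz.
-
  move: nz; rewrite block_mxEul => nz.
  have ij1 : (i, j) \in bel_positions p by rewrite mem_bel.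
  have hk1 := onth_index ij1.
  have h1 := f1 _ _ hk1 nz.
  apply: (fp_sub _ nz h1) => x [g Sg <-].
  have [hg sN ag e1 _] := common g Sg.
  exists (ulsubmx g); last by rewrite /= -e1 ul_entry.
  split; first exact: inv_upper_ul.
  move=> [a b] hab /=; rewrite (take_bel _ hk1) in hab; case/andP: hab => abs abl.
  rewrite mem_bel /= in abs.
  rewrite -e1 ul_entry (ag (lshift q a, lshift q b)) ?block_mxEul //.
  by rewrite (take_bel _ hk) mem_bel /=; apply/andP; split.
-
  move: nz; rewrite block_mxEur => nz.
  case: hQ => [h01 [hrow hcol]].
  have qb : block_mx Q1 Q12 0 Q2 (lshift q i) (rshift p j) = 1.
    by have := h01 (lshift q i) (rshift p j); rewrite block_mxEur; case => // e; rewrite e eqxx in nz.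
  have qb0 : block_mx Q1 Q12 0 Q2 (lshift q i) (rshift p j) != 0 by rewrite qb oner_neq0.
  have q1 : Q12 i j = 1 by rewrite -qb block_mxEur.
  pose U2' := \matrix_(a, b) if [exists r, Q12 r a != 0] then (1%:M : 'M[F]_q) a b else U2 a b.
  pose Ub := block_mx U1 0 0 U2'.
  have eQ12 : Q12 *m U2' = Q12.
    suff -> : Q12 *m U2' = Q12 *m 1%:M by rewrite mulmx1.
    apply/matrixP => r b; rewrite !mulmx_entryR.
    apply: eq_bigr => a _; rewrite mxE; case: ifP => // /negbT /existsPn /(_ r).
    by move/negPn/eqP => ->; rewrite !mul0r.
  have eQ2 : Q2 *m U2' = Q2 *m U2.
    apply/matrixP => r b; rewrite !mulmx_entryR.
    apply: eq_bigr => a _; rewrite mxE; case: ifP => // /existsP [r' nr'].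
    case: (eqVneq (Q2 r a) 0) => [-> | nra]; first by rewrite !mul0r.
    have := hcol (lshift q r') (rshift p r) (rshift p a).
    rewrite block_mxEur block_mxEdr => /(_ nr' nra) /(congr1 val) /=.
    have := ltn_ord r'; lia.
  have eQU : block_mx A1 Q12 0 A2 = block_mx Q1 Q12 0 Q2 *m Ub.
    rewrite mulmx_block !mulmx0 !mul0mx !addr0 !add0r eQ12 eQ2.
    by rewrite -eA1 -eA2.
  have uUb : unipotent_upper Ub.
    case: hU1 => [l1 d1]; case: hU2 => [l2 d2]; split.
      move=> a b; elim/ord_split_ind: a => a; elim/ord_split_ind: b => b /= ba.
      - by rewrite block_mxEul l1.
      - have := ltn_ord a; lia.
      - by rewrite block_mxEdl mxE.
      - rewrite block_mxEdr !mxE; case: ifP => _; last by rewrite l2 // -(ltn_add2l p).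
        by case: eqP => // e; move: ba; rewrite e ltnn.
    move=> a; elim/ord_split_ind: a => a.
    - by rewrite block_mxEul d1.
    - by rewrite block_mxEdr !mxE eqxx; case: ifP.
  have hcolj : forall a, block_mx Q1 Q12 0 Q2 a (rshift p j) = (a == lshift q i)%:R.
    move=> a; case: (eqVneq a (lshift q i)) => [-> | na]; first by rewrite qb.
    case: (eqVneq (block_mx Q1 Q12 0 Q2 a (rshift p j)) 0) => // nz'.
    by move: na; rewrite (hcol _ _ _ nz' qb0) eqxx.
  rewrite q1; split => // hall.
  have [g Sg e0] := hall 0.
  have [hg sN ag _ _] := common g Sg.
  have hN : forall b : 'I_(p + q), (b < rshift p j)%N ->
      conjmx g (block_mx A1 Q12 0 A2) (lshift q i) b = 0.
  move=> b bj; case: (leqP b (lshift q i)) => bi; first by apply: sN.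
  rewrite (ag (lshift q i, b)); last first.
    rewrite (take_bel _ hk) mem_bel /= bi /belt /= eqxx /= ltnn; exact: bj.
  rewrite /= eQU mulmx_entry big1 // => a _.
  case: (eqVneq (block_mx Q1 Q12 0 Q2 (lshift q i) a) 0) => [-> | na]; first by rewrite mul0r.
  rewrite (hrow _ _ _ na qb0); case: uUb => [lU _]; by rewrite lU ?mulr0.
  by have := pivot uUb hg hcolj; rewrite -eQU e0 eqxx => /(_ hN).
-
  by move: nz; rewrite block_mxEdl mxE eqxx.
-
  move: nz; rewrite block_mxEdr => nz.
  have ij2 : (i, j) \in bel_positions q by rewrite mem_bel -(ltn_add2l p).
  have hk2 := onth_index ij2.
  have h2 := f2 _ _ hk2 nz.
  apply: (fp_sub _ nz h2) => x [g Sg <-].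
  have [hg sN ag _ e2] := common g Sg.
  exists (drsubmx g); last by rewrite /= -e2 dr_entry.
  split; first exact: inv_upper_dr.
  move=> [a b] hab /=; rewrite (take_bel _ hk2) in hab; case/andP: hab => abs abl.
  rewrite mem_bel /= in abs.
  rewrite -e2 dr_entry (ag (rshift p a, rshift p b)) ?block_mxEdr //.
  rewrite (take_bel _ hk) mem_bel /=; move: abl; rewrite /belt /=.
  by rewrite ltn_add2l abs /= ltn_add2l eqn_add2l ltn_add2l.
Qed.

End Main.

Theorem theorem2p7 (F : fieldType) (p q : nat)
  (A1 Q1 : 'M[F]_p) (A2 Q2 : 'M[F]_q) (Q12 : 'M[F]_(p, q)) :
  belitskii_canonical A1 -> belitskii_canonical A2 ->
  subperm_mx Q1 -> strict_upper Q1 ->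
  subperm_mx Q2 -> strict_upper Q2 ->
  (exists2 U : 'M[F]_p, unipotent_upper U & A1 = Q1 *m U) ->
  (exists2 U : 'M[F]_q, unipotent_upper U & A2 = Q2 *m U) ->
  subperm_mx (block_mx Q1 Q12 0 Q2) ->
  belitskii_canonical (block_mx A1 Q12 0 A2).
Proof.
move=> c1 c2 _ _ _ _ [U1 hU1 e1] [U2 hU2 e2] hQ.
have [sA1 f1] := canon_FP c1; have [sA2 f2] := canon_FP c2.
have [sM fM] := block_FP sA1 f1 sA2 f2 hU1 e1 hU2 e2 hQ.
exact: FP_canon sM fM.
Qed.
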